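(* There is an absolute constant $c>0$ such that for every $m\ge 3$ and every $n$ that is a multiple of $m-1$ with $n\ge 2(m-1)$, there is a preference profile with $n$ agents and $m$ alternatives on which Plurality Veto (with any processing order of the agents) has utilitarian distortion at least $c\,n/m$. In particular, the utilitarian distortion of Plurality Veto is $\Omega(n/m)$.
   Context: Setting: $\mathcal N$ is a set of $n$ agents and $\mathcal A$ a set of $m$ alternatives. Each agent $i$ has a strict ranking $\sigma_i$ of $\mathcal A$; $r_i(X)$ is the position of $X$ in $\sigma_i$ (1 = top) and $X\succ_i Y$ means $r_i(X)<r_i(Y)$. The plurality score $\mathrm{plu}(X,\vec\sigma)$ is the number of agents ranking $X$ first. A (randomized) voting rule maps each profile $\vec\sigma=(\sigma_1,\dots,\sigma_n)$ to a probability distribution over $\mathcal A$; it is deterministic if it always outputs a point mass. Utilitarian framework: each agent has $u_i:\mathcal A\to\mathbb R_{\ge 0}$ with $\sum_{X}u_i(X)=1$; the utility profile $\vec u$ is consistent with $\vec\sigma$ if $X\succ_i Y\Rightarrow u_i(X)\ge u_i(Y)$. $\mathrm{SW}(X,\vec u)=\sum_i u_i(X)$. The utilitarian distortion of a distribution $p$ on $\vec u$ is $\max_X \mathrm{SW}(X,\vec u)/\mathbb E_{X\sim p}[\mathrm{SW}(X,\vec u)]$; the utilitarian distortion of a rule $f$ on $\vec\sigma$ is the supremum of this over all $\vec u$ consistent with $\vec\sigma$, and the utilitarian distortion of $f$ is the maximum over all profiles. Plurality Veto: initialize $\mathrm{score}(X)=\mathrm{plu}(X,\vec\sigma)$ for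 every $X$, and let $S$ be the set of alternatives with positive score. Process the agents one by one in some fixed order; when agent $i$ is processed, let $Y$ be the alternative in $S$ that $i$ ranks lowest, decrease $\mathrm{score}(Y)$ by one, and remove $Y$ from $S$ if its score becomes $0$. Output the alternative removed from $S$ last (at the final step). *)

(* Defs.v *)
From HB Require Import structures.
From mathcomp Require Import all_boot all_order all_algebra all_fingroup.
From mathcomp Require Import all_classical all_reals ereal.
Set Implicit Arguments. Unset Strict Implicit. Unset Printing Implicit Defensive.
Import Order.TTheory GRing.Theory Num.Theory.

(* A profile assigns to each agent i
   a ranking sigma i : {perm 'I_m}, where (sigma i X : nat) is the position of
   X in agent i's ranking, 0-indexed (0 = top, i.e. r_i(X) = sigma i X + 1). *)
Definition profile (n m : nat) := 'I_n -> {perm 'I_m}.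

Section Voting.
Variables (n m : nat) (sig : profile n m).

Definition prefers (i : 'I_n) (X Y : 'I_m) : bool := (sig i X < sig i Y)%N.

Definition plu (X : 'I_m) : nat := #|[set i | (sig i X : nat) == 0%N]|.

Definition veto (i : 'I_n) (sc : 'I_m -> nat) : option 'I_m :=
  [pick Y | (0 < sc Y)%N && [forall X, (0 < sc X)%N ==> (sig i X <= sig i Y)%N]].

(* one step of Plurality Veto: state = (scores, last vetoed alternative);
   S is the set of alternatives of positive score. *)
Definition pv_step (st : ('I_m -> nat) * option 'I_m) (i : 'I_n)
  : ('I_m -> nat) * option 'I_m :=
  match veto i st.1 with
  | Some Y => (fun X => if X == Y then (st.1 X).-1 else st.1 X, Some Y)
  | None => (st.1, None)
  end.

(* Plurality Veto with processing order ord: agents ord 0, ord 1, ..., ord (n-1)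
   are processed in turn; the output is the alternative treated at the final
   step (which is the one removed from S last). *)
Definition pv_winner (ord : {perm 'I_n}) : option 'I_m :=
  (foldl pv_step (plu, None) [seq ord k | k <- enum 'I_n]).2.

Variable R : realType.

Definition utility_profile (u : 'I_n -> 'I_m -> R) : Prop :=
  (forall i X, 0 <= u i X)%R /\ (forall i, \sum_(X < m) u i X = 1)%R.

Definition consistent (u : 'I_n -> 'I_m -> R) : Prop :=
  forall i X Y, prefers i X Y -> (u i Y <= u i X)%R.

Definition SW (u : 'I_n -> 'I_m -> R) (X : 'I_m) : R := (\sum_(i < n) u i X)%R.

(* max_X SW(X,u) / SW(W,u), with the convention  x / 0 = +oo *)
Definition dist_ratio (u : 'I_n -> 'I_m -> R) (W : 'I_m) : \bar R :=
  let best := (\big[Num.max/0%R]_(X < m) SW u X)%R in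
  if SW u W == 0%R then +oo%E else ((best / SW u W)%R)%:E.

Definition distortion (W : 'I_m) : \bar R :=
  ereal_sup [set r | exists u, utility_profile u /\ consistent u /\ r = dist_ratio u W].

End Voting.

(* Main.v *)
Require Import Defs.
From HB Require Import structures.
From mathcomp Require Import all_boot all_order all_algebra all_fingroup.
From mathcomp Require Import all_classical all_reals ereal.
From mathcomp Require Import zify ring lra.
Import Order.TTheory GRing.Theory Num.Theory.

(* types: 0 = (a,b,c), 1 = (a,c,b), 2 = (b,a,c), 3 = (c,a,b) *)
Definition tgtn (ty : nat) (pa pb pc : bool) : nat :=
  match ty with
  | 0 => if pc then 2 else if pb then 1 else 0
  | 1 => if pb then 1 else if pc then 2 else 0
  | 2 => if pc then 2 else if pa then 0 else 1
  | _ => if pb then 1 else if pa then 0 else 2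
  end.

Definition posn (ty j : nat) : nat :=
  match ty, j with
  | 0, j => j
  | 1, 0 => 0 | 1, 1 => 2 | 1, _ => 1
  | 2, 0 => 1 | 2, 1 => 0 | 2, _ => 2
  | _, 0 => 1 | _, 1 => 2 | _, _ => 0
  end.

Lemma tgt_ok ty (p0 p1 p2 : bool) : p0 || p1 || p2 ->
  let j0 := tgtn ty p0 p1 p2 in
  [&& j0 < 3, nth false [:: p0; p1; p2] j0 &
   all (fun j => nth false [:: p0; p1; p2] j ==> (posn ty j <= posn ty j0)) (iota 0 3)].
Proof.
by case: ty => [|[|[|ty]]]; case: p0; case: p1; case: p2.
Qed.

Definition Inv (sa sb sc r0 r1 r2 r3 la : nat) : Prop :=
  sa + sb + sc = r0 + r1 + r2 + r3 /\
  ( (0 < sb /\ 0 < sc /\ r2 + r0 < sc + sa /\ r3 + r1 < sb + sa)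
  \/ (sc = 0 /\ 0 < sb /\ r2 < sa)
  \/ (sb = 0 /\ 0 < sc /\ r3 < sa)
  \/ (sb = 0 /\ sc = 0 /\ 0 < sa + la)).

Lemma Inv_step sa sb sc r0 r1 r2 r3 la ty :
  ty < 4 ->
  Inv sa sb sc (r0 + (ty == 0)) (r1 + (ty == 1)) (r2 + (ty == 2)) (r3 + (ty == 3)) la ->
  let j0 := tgtn ty (0 < sa) (0 < sb) (0 < sc) in
  Inv (if j0 == 0 then sa.-1 else sa) (if j0 == 1 then sb.-1 else sb)
      (if j0 == 2 then sc.-1 else sc) r0 r1 r2 r3 (j0 == 0).
Proof.
case: ty => [|[|[|[|ty]]]] // _;
case: sa => [|sa]; case: sb => [|sb]; case: sc => [|sc]; rewrite /Inv /=; lia.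
Qed.

Lemma Inv_end sa sb sc la : Inv sa sb sc 0 0 0 0 la -> 0 < la.
Proof. rewrite /Inv; lia. Qed.

Lemma count_int lo hi s n :
  count (fun k => lo <= k < hi) (iota s n) = minn (hi - s) n - minn (lo - s) n.
Proof.
elim: n s => [|n IH] s /=; first by lia.
rewrite IH; case: (leqP lo s) => h1; case: (ltnP s hi) => h2 /=; lia.
Qed.



Section Constr.
Variables (m' n x : nat).
Local Notation M := m'.+3.

Definition abc (j : nat) : 'I_M := inord j.
Definition typ (k : nat) : nat :=
  if k < 2 then 0 else if k < 4 then 1 else if k < 4 + x then 2 else 3.
Definition permty (ty : nat) : {perm 'I_M} :=
  match ty with
  | 0 => 1
  | 1 => tperm (abc 1) (abc 2)
  | 2 => tperm (abc 0) (abc 1)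
  | _ => tperm (abc 0) (abc 1) * tperm (abc 0) (abc 2)
  end.
Definition prof : profile n M := fun i => permty (typ i).

Lemma typ_lt4 k : typ k < 4.
Proof. by rewrite /typ; repeat case: ifP. Qed.

Lemma abcK j : j < 3 -> val (abc j) = j.
Proof. by move=> h; rewrite /abc /= inordK //; lia. Qed.

Lemma abc_eq j k : j < 3 -> k < 3 -> (abc j == abc k) = (j == k).
Proof. by move=> hj hk; rewrite -val_eqE /= !abcK. Qed.

Lemma posP ty j : j < 3 -> val (permty ty (abc j)) = posn ty j.
Proof.
case: j => [|[|[|j]]] // _;
case: ty => [|[|[|ty]]]; rewrite /permty ?perm1 ?permM;
  rewrite ?[tperm _ _ _]permE /= ?abc_eq //= ?[tperm _ _ _]permE /= ?abc_eq //= ?abcK //.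
Qed.

Lemma posO ty X : 2 < val X -> permty ty X = X.
Proof.
move=> hX.
have hne : forall j, j < 3 -> (X == abc j) = false.
  by move=> j hj; apply/negbTE; rewrite -val_eqE /= abcK //; apply/eqP => e; move: hX hj; rewrite /= e; lia.
case: ty => [|[|[|ty]]]; rewrite /permty ?perm1 ?permM;
  rewrite ?[tperm _ _ _]permE /= ?hne //.
Qed.


Lemma sigP (i : 'I_n) j : j < 3 -> val (prof i (abc j)) = posn (typ i) j.
Proof. exact: posP. Qed.

Lemma veto_some i (s : 'I_M -> nat) Y : 0 < s Y ->
  (forall X, 0 < s X -> prof i X <= prof i Y) -> veto prof i s = Some Y.
Proof.
move=> hY hall; rewrite /veto.
case: pickP => [Z /andP[hZ /forallP hZ'] | h]; last first.
  by move: (h Y); rewrite hY /=; move/negbT/negP; case; apply/forallP => X; apply/implyP/hall.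
congr Some; apply: (@perm_inj _ (prof i)); apply: val_inj; apply/eqP.
by rewrite eqn_leq hall //; move: (hZ' Y); rewrite hY.
Qed.

Definition supp (s : 'I_M -> nat) := forall X : 'I_M, 2 < val X -> s X = 0.

Lemma step_abc st i : supp st.1 ->
  (0 < st.1 (abc 0)) || (0 < st.1 (abc 1)) || (0 < st.1 (abc 2)) ->
  pv_step prof st i =
   (fun X => if X == abc (tgtn (typ i) (0 < st.1 (abc 0)) (0 < st.1 (abc 1)) (0 < st.1 (abc 2)))
             then (st.1 X).-1 else st.1 X,
    Some (abc (tgtn (typ i) (0 < st.1 (abc 0)) (0 < st.1 (abc 1)) (0 < st.1 (abc 2))))).
Proof.
move=> hs hpos.
move: (@tgt_ok (typ i) _ _ _ hpos).
set j0 := tgtn _ _ _ _ => /and3P[hj0 hp /allP hall].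
have nthE : forall j, j < 3 -> nth false [:: 0 < st.1 (abc 0); 0 < st.1 (abc 1); 0 < st.1 (abc 2)] j = (0 < st.1 (abc j)).
  by case=> [|[|[|j]]].
rewrite /pv_step (@veto_some i st.1 (abc j0)) //; first by rewrite -nthE.
move=> X hX.
have hX3 : val X < 3.
  by case: (ltnP (val X) 3) => // h; move: hX; rewrite hs.
have -> : X = abc (val X) by apply: val_inj; rewrite abcK.
rewrite !sigP //.
have := hall (val X); rewrite mem_iota /= hX3 nthE // -(_ : X = abc (val X)) ?hX //.
  by move=> /(_ isT).
by apply: val_inj; rewrite abcK.
Qed.


Definition cnt j (s : seq 'I_n) := count (fun i : 'I_n => typ i == j) s.
Definition laof (o : option 'I_M) : nat := o == Some (abc 0).

Lemma run (s : seq 'I_n) st : supp st.1 ->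
  Inv (st.1 (abc 0)) (st.1 (abc 1)) (st.1 (abc 2))
      (cnt 0 s) (cnt 1 s) (cnt 2 s) (cnt 3 s) (laof st.2) ->
  (foldl (pv_step prof) st s).2 = Some (abc 0).
Proof.
elim: s st => [|i s IH] st hs hinv /=.
  by have := @Inv_end _ _ _ _ hinv; rewrite /laof; case: eqP.
have hpos : (0 < st.1 (abc 0)) || (0 < st.1 (abc 1)) || (0 < st.1 (abc 2)).
  have hsz : 0 < cnt 0 (i :: s) + cnt 1 (i :: s) + cnt 2 (i :: s) + cnt 3 (i :: s).
    by rewrite /cnt /=; move: (typ_lt4 i); case: (typ i) => [|[|[|[|?]]]] //= _; lia.
  move: hinv => [hsum _].
  rewrite !lt0n; case: eqP => e0 //=; case: eqP => e1 //=; case: eqP => e2 //=; lia.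
rewrite step_abc //.
set j0 := tgtn _ _ _ _.
have hj0 : j0 < 3.
  by move: (@tgt_ok (typ i) _ _ _ hpos) => /and3P[].
apply: IH => /=.
  move=> X hX; rewrite hs //; case: eqP => // e; move: hX; rewrite e abcK //.
have := @Inv_step (st.1 (abc 0)) (st.1 (abc 1)) (st.1 (abc 2)) (cnt 0 s) (cnt 1 s) (cnt 2 s) (cnt 3 s) (laof st.2) (typ i) (typ_lt4 i).
move: hinv; rewrite /cnt /= ![(_ == _) + count _ _]addnC => hinv /(_ hinv).
rewrite -/j0 !abc_eq // /laof /= (inj_eq (@Some_inj _)) abc_eq //.
by rewrite ![_ == j0]eq_sym.
Qed.


Lemma card_cnt (P : pred 'I_n) : #|P| = count P (enum 'I_n).
Proof. by rewrite -sum1_count -sum1_card big_enum_cond. Qed.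

Lemma cnt_iota (P : pred nat) : count (fun i : 'I_n => P i) (enum 'I_n) = count P (iota 0 n).
Proof. by rewrite -val_enum_ord count_map. Qed.

Lemma cnt_perm (ord : {perm 'I_n}) j :
  cnt j [seq ord k | k <- enum 'I_n] = count (fun k => typ k == j) (iota 0 n).
Proof.
rewrite -cnt_iota /cnt.
have hp : perm_eq [seq ord k | k <- enum 'I_n] (enum 'I_n).
  apply: uniq_perm; first by rewrite (map_inj_uniq (@perm_inj _ ord)) enum_uniq.
    exact: enum_uniq.
  move=> i; rewrite mem_enum; apply/mapP; exists ((ord^-1)%g i); rewrite ?mem_enum ?permKV //.
by move/seq.permP: hp => ->.
Qed.

Hypothesis hn : 4 <= n.
Hypothesis hx : x <= n - 4.
Hypothesis hxy : n - 4 - x <= x <= n - 4 - x + 1.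

Lemma cA1 : count (fun k => typ k == 0) (iota 0 n) = 2.
Proof.
rewrite (eq_count (a2 := fun k => 0 <= k < 2)) ?count_int; first lia.
move=> k; rewrite /typ; do !case: ifP => ? //=; lia.
Qed.


Lemma cA2 : count (fun k => typ k == 1) (iota 0 n) = 2.
Proof.
rewrite (eq_count (a2 := fun k => 2 <= k < 4)) ?count_int; first lia.
move=> k; rewrite /typ; do !case: ifP => ? //=; lia.
Qed.

Lemma cB : count (fun k => typ k == 2) (iota 0 n) = x.
Proof.
rewrite (eq_count (a2 := fun k => 4 <= k < 4 + x)) ?count_int; first lia.
move=> k; rewrite /typ; do !case: ifP => ? //=; lia.
Qed.

Lemma cC : count (fun k => typ k == 3) (iota 0 n) = n - 4 - x.
Proof.
rewrite (eq_in_count (a2 := fun k => 4 + x <= k < n)) ?count_int; first lia.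
move=> k; rewrite mem_iota /typ; do !case: ifP => ? //=; lia.
Qed.

Lemma pA : count (fun k => posn (typ k) 0 == 0) (iota 0 n) = 4.
Proof.
rewrite (eq_count (a2 := fun k => 0 <= k < 4)) ?count_int; first lia.
move=> k; rewrite /typ; do !case: ifP => ? //=; lia.
Qed.

Lemma pB : count (fun k => posn (typ k) 1 == 0) (iota 0 n) = x.
Proof.
rewrite (eq_count (a2 := fun k => 4 <= k < 4 + x)) ?count_int; first lia.
move=> k; rewrite /typ; do !case: ifP => ? //=; lia.
Qed.

Lemma pC : count (fun k => posn (typ k) 2 == 0) (iota 0 n) = n - 4 - x.
Proof.
rewrite (eq_in_count (a2 := fun k => 4 + x <= k < n)) ?count_int; first lia.
move=> k; rewrite mem_iota /typ; do !case: ifP => ? //=; lia.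
Qed.

Lemma pluP j : j < 3 -> plu prof (abc j) = count (fun k => posn (typ k) j == 0) (iota 0 n).
Proof.
move=> hj; rewrite /plu cardsE card_cnt -cnt_iota.
by apply: eq_count => i; rewrite /= sigP.
Qed.

Lemma plu_supp : supp (plu prof).
Proof.
move=> X hX; rewrite /plu cardsE card_cnt.
rewrite (eq_count (a2 := pred0)) ?count_pred0 // => i /=.
by rewrite /prof posO //; apply/negbTE/eqP => e; move: hX; rewrite /= e.
Qed.

Lemma winner ord : pv_winner prof ord = Some (abc 0).
Proof.
rewrite /pv_winner; apply: run; first exact: plu_supp.
rewrite /= !pluP // !cnt_perm cA1 cA2 cB cC pA pB pC /Inv.
lia.
Qed.


Variable R : realType.
Local Open Scope ring_scope.

Definition uu (i : 'I_n) (X : 'I_M) : R :=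
  if (typ i < 2)%N then M%:R^-1 else if typ i == 2 then (X == abc 1)%:R else (X == abc 2)%:R.

Lemma sum_delta (Y : 'I_M) : \sum_(X < M) ((X == Y)%:R : R) = 1.
Proof. by rewrite (bigD1 Y) //= eqxx big1 ?addr0 // => X /negbTE ->. Qed.

Lemma uu_prof : utility_profile uu.
Proof.
split.
  by move=> i X; rewrite /uu; case: ifP => _; [rewrite invr_ge0 ler0n | case: ifP => _; exact: ler0n].
move=> i; rewrite /uu; case: (typ i < 2)%N; last by case: (typ i == 2); exact: sum_delta.
by rewrite sumr_const card_ord -[_ *+ _]mulr_natr mulVf // pnatr_eq0.
Qed.

Lemma uu_cons : consistent prof uu.
Proof.
move=> i X Y hlt; rewrite /uu; case: ifP => h2 //.
have T : forall j, (j < 3)%N -> posn (typ i) j = 0%N ->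
    (prof i X < prof i Y)%N -> (Y == abc j)%:R <= ((X == abc j)%:R : R).
  move=> j hj hp hlt'; case: eqP => [eY|_]; last exact: ler0n.
  by move: hlt'; rewrite eY (@sigP i j hj) hp.
have h4 := typ_lt4 i.
case: ifP => /eqP h.
  by apply: T hlt => //; rewrite h.
have h3 : typ i = 3%N by move: h2 => /negbT; rewrite -leqNgt; move/eqP: h; lia.
by apply: T hlt => //; rewrite h3.
Qed.


Lemma sum_ind (P : pred 'I_n) : \sum_(i < n) ((P i)%:R : R) = (count P (enum 'I_n))%:R.
Proof.
rewrite -card_cnt -sum1_card natr_sum [RHS]big_mkcond /=.
by apply: eq_bigr => i _; have -> : (i \in P) = P i by []; case: (P i).
Qed.

Lemma cAA : count (fun k => typ k < 2)%N (iota 0 n) = 4%N.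
Proof.
rewrite (eq_count (a2 := fun k => 0 <= k < 4)%N) ?count_int; first lia.
move=> k; rewrite /typ; do !case: ifP => ? //=; lia.
Qed.

Lemma SWa : SW uu (abc 0) = 4%:R / M%:R.
Proof.
rewrite /SW (eq_bigr (fun i : 'I_n => ((typ i < 2)%N)%:R * M%:R^-1)); last first.
  move=> i _; rewrite /uu; case: ifP => _; first by rewrite mul1r.
  by rewrite mul0r !abc_eq //; case: ifP.
by rewrite -mulr_suml sum_ind (cnt_iota (fun k => typ k < 2)%N) cAA.
Qed.

Lemma SWb : SW uu (abc 1) = 4%:R / M%:R + x%:R.
Proof.
rewrite /SW (eq_bigr (fun i : 'I_n => ((typ i < 2)%N)%:R * M%:R^-1 + ((typ i == 2))%:R)); last first.
  move=> i _; rewrite /uu; case: ifP => h; first by rewrite mul1r (_ : typ i == 2 = false) ?addr0 //; apply/negbTE/eqP => e; rewrite e in h.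
  by rewrite mul0r add0r !abc_eq //; case: ifP.
rewrite big_split /= -mulr_suml !sum_ind (cnt_iota (fun k => typ k < 2)%N) cAA.
by rewrite (cnt_iota (fun k => typ k == 2)) cB.
Qed.


Lemma dist_bound : (((1/8 * n%:R / M%:R : R))%:E <= distortion prof R (abc 0))%E.
Proof.
apply: (@le_trans _ _ (dist_ratio uu (abc 0))); last first.
  by apply: ereal_sup_ubound; exists uu; split; [exact: uu_prof | split; [exact: uu_cons|]].
have hM : (0 : R) < M%:R by rewrite ltr0n.
have hSW : SW uu (abc 0) != 0 by rewrite SWa mulf_neq0 ?invr_eq0 ?pnatr_eq0.
rewrite /dist_ratio (negbTE hSW) lee_fin SWa.
set best := \big[Num.max/0]_(X < M) SW uu X.
have hb : 4%:R / M%:R + x%:R <= best.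
  by rewrite -SWb; apply: (le_bigmax (0 : R) (SW uu) (abc 1)).
have hnat : (n <= 2 * M * (M * x + 4))%N by lia.
have hnR : (n%:R : R) <= 2 * M%:R * (M%:R * x%:R + 4).
  by move: hnat; rewrite -(ler_nat R) !(natrM, natrD).
rewrite ler_pdivlMr ?divr_gt0 ?ltr0n //.
apply: le_trans hb.
have -> : 1 / 8 * n%:R / M%:R * (4%:R / M%:R) = (n%:R : R) / (2 * M%:R ^+ 2).
  by field; apply/eqP; have := ler0n R m'; lra.
rewrite ler_pdivrMr ?mulr_gt0 ?exprn_gt0 //.
apply: (le_trans hnR).
have -> : (4 / M%:R + x%:R) * (2 * M%:R ^+ 2) = 2 * M%:R * (M%:R * x%:R + 4) :> R.
  by field; apply/eqP; have := ler0n R m'; lra.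
by [].
Qed.

End Constr.

Theorem mainTheorem1 (R : realType) :
  exists c : R, (0 < c)%R /\
  forall m n : nat, (3 <= m)%N -> (m - 1 %| n)%N -> (2 * (m - 1) <= n)%N ->
  exists sig : profile n m,
  forall ord : {perm 'I_n},
  exists W : 'I_m, pv_winner sig ord = Some W /\
    (((c * n%:R / m%:R)%R)%:E <= distortion sig R W)%E.
Proof.
exists (1/8)%R; split; first by rewrite divr_gt0 ?ltr0n.
move=> [|[|[|m']]] // n _ _ hn.
have hn4 : (3 < n)%N by move: hn; rewrite /=; lia.
pose x := (n - 4 - (n - 4) %/ 2)%N.
have hx : (x <= n - 4)%N by rewrite /x; lia.
have hxy : (n - 4 - x <= x <= n - 4 - x + 1)%N by rewrite /x; lia.
exists (prof m' n x) => ord; exists (abc m' 0); split.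
  exact: winner.
exact: dist_bound.
Qed.
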